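(* Let $g\in\mathcal{G}$ be an $\mathbb{S}$-nearly periodic function that is bounded above by a sub-polynomial function. Then there exist $\alpha>0$ and an increasing sequence $(y_k)$ of positive integers such that $g(y_k)\le y_k^{-\alpha}$ for all $k$ and, for every $x\in\mathbb{N}$, $\lim_{k\to\infty} g(x+y_k)=g(x)$.
   Context: $\mathcal{G}=\{g:\mathbb{Z}_{\ge0}\to\mathbb{R}: g(0)=0,\ g(1)=1,\ g(x)>0\ \forall x>0\}$. A function $f:\mathbb{R}_{\ge0}\to\mathbb{R}_{\ge0}$ is sub-polynomial if for every $\alpha>0$, $\lim_{x\to\infty}x^\alpha f(x)=\infty$ and $\lim_{x\to\infty}x^{-\alpha}f(x)=0$. For a set $\mathcal{S}$ of functions, $g$ is $\mathcal{S}$-nearly periodic if (1) there is $\alpha>0$ such that for every $N>0$ there exist $x,y\in\mathbb{N}$, $x<y$, $y\ge N$ with $g(y)\le g(x)/y^\alpha$ (such $y$ is called an $\alpha$-period of $g$); and (2) for every $\alpha>0$ and every $h\in\mathcal{S}$ there is $N_1>0$ such that for all $\alpha$-periods $y\ge N_1$ and all $x<y$ with $g(y)y^\alpha\le g(x)$, $|g(x+y)-g(x)|\le \min\{g(x),g(x+y)\}h(y)$. $\mathbb{S}$ denotes the set of non-increasing sub-polynomial functions on $\mathbb{Z}_{\ge0}$. *)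

(* Defs.v *)
From Stdlib Require Export Reals Lra.
Open Scope R_scope.

Definition in_G (g : nat -> R) : Prop :=
  g 0%nat = 0 /\ g 1%nat = 1 /\ (forall x : nat, (0 < x)%nat -> 0 < g x).

(* Sub-polynomial function f : R_{>=0} -> R_{>=0} (represented as R -> R,
   nonnegative on [0,oo)); x^a is Rpower x a, only evaluated for x > 0. *)
Definition subpoly_R (f : R -> R) : Prop :=
  (forall x, 0 <= x -> 0 <= f x) /\
  (forall a, 0 < a ->
     (forall M, exists X, forall x, X <= x -> 0 < x -> M <= Rpower x a * f x) /\
     (forall eps, 0 < eps -> exists X, forall x, X <= x -> 0 < x ->
        Rabs (Rpower x (- a) * f x) < eps)).

Definition subpoly_N (f : nat -> R) : Prop :=
  (forall n, 0 <= f n) /\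
  (forall a, 0 < a ->
     (forall M, exists N : nat, forall n : nat, (N <= n)%nat -> (0 < n)%nat ->
        M <= Rpower (INR n) a * f n) /\
     (forall eps, 0 < eps -> exists N : nat, forall n : nat, (N <= n)%nat -> (0 < n)%nat ->
        Rabs (Rpower (INR n) (- a) * f n) < eps)).

Definition in_SS (h : nat -> R) : Prop :=
  subpoly_N h /\ (forall m n : nat, (m <= n)%nat -> h n <= h m).

Definition alpha_period (g : nat -> R) (a : R) (y : nat) : Prop :=
  exists x : nat, (x < y)%nat /\ g y <= g x / Rpower (INR y) a.

Definition nearly_periodic (S : (nat -> R) -> Prop) (g : nat -> R) : Prop :=
  (exists a, 0 < a /\ forall N : nat, (0 < N)%nat ->
     exists x y : nat, (x < y)%nat /\ (N <= y)%nat /\ g y <= g x / Rpower (INR y) a) /\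
  (forall a, 0 < a -> forall h, S h -> exists N1 : nat,
     forall y : nat, alpha_period g a y -> (N1 <= y)%nat ->
     forall x : nat, (x < y)%nat -> g y * Rpower (INR y) a <= g x ->
       Rabs (g (x + y)%nat - g x) <= Rmin (g x) (g (x + y)%nat) * h y).

(* Main.v *)
Require Import Defs.
From Stdlib Require Import Reals Lra Lia ZArith.
From Stdlib Require Import IndefiniteDescription.

Lemma nat_above (r : R) : exists N : nat, r < INR N.
Proof.
  destruct (archimed r) as [H1 _].
  destruct (Z_lt_le_dec 0 (up r)) as [Hp|Hn].
  - exists (Z.to_nat (up r)). rewrite INR_IZR_INZ, Z2Nat.id by lia. lra.
  - exists 0%nat. simpl. apply IZR_le in Hn. lra.
Qed.

Lemma Rpower_pos x c : 0 < Rpower x c.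
Proof. unfold Rpower; apply exp_pos. Qed.

Lemma pow_large (b M : R) : 0 < b -> exists N : nat, forall n : nat, (N <= n)%nat ->
  M <= Rpower (INR n) b.
Proof.
  intros hb. destruct (nat_above (exp (Rabs M / b))) as [N HN].
  exists N. intros n hn. apply le_INR in hn.
  assert (h0 : 0 < exp (Rabs M / b)) by apply exp_pos.
  assert (hl : Rabs M / b <= ln (INR n)).
  { rewrite <- (ln_exp (Rabs M / b)). left. apply ln_increasing; lra. }
  unfold Rpower. pose proof (exp_ineq1_le (b * ln (INR n))).
  assert (Rabs M <= b * ln (INR n)).
  { apply (Rmult_le_compat_l b) in hl; [|lra].
    replace (b * (Rabs M / b)) with (Rabs M) in hl by (field; lra). lra. }
  pose proof (Rle_abs M). lra.
Qed.

Lemma rp_n x n c : 0 < x -> Rpower x (INR n * c) = (Rpower x c) ^ n.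
Proof.
  intros hx. rewrite Rmult_comm, <- Rpower_mult, Rpower_pow; auto. apply Rpower_pos.
Qed.

Lemma Rpower_ge1 y b : 1 <= y -> 0 <= b -> 1 <= Rpower y b.
Proof.
  intros hy hb. replace 1 with (Rpower 1 b) at 1.
  - apply Rle_Rpower_l; lra.
  - unfold Rpower. rewrite ln_1, Rmult_0_r. apply exp_0.
Qed.
Open Scope R_scope.

Lemma const_SS c : 0 < c -> in_SS (fun _ => c).
Proof.
  intros hc. split; [split|].
  - intros; lra.
  - intros a ha. split.
    + intros M. destruct (pow_large a (M / c) ha) as [N HN]. exists N.
      intros n hn _. specialize (HN n hn).
      apply (Rmult_le_compat_r c) in HN; [|lra].
      replace (M / c * c) with M in HN by (field; lra). lra.
    + intros eps he. destruct (pow_large a (2 * c / eps) ha) as [N HN]. exists N.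
      intros n hn _. specialize (HN n hn).
      rewrite Rpower_Ropp. set (P := Rpower (INR n) a) in *.
      assert (0 < 2 * c / eps) by (apply Rdiv_lt_0_compat; lra).
      assert (hP : 0 < P) by lra.
      rewrite Rabs_pos_eq.
      * apply (Rmult_lt_reg_l P); [lra|].
        replace (P * (/ P * c)) with c by (field; lra).
        apply (Rmult_le_compat_r eps) in HN; [|lra].
        replace (2 * c / eps * eps) with (2 * c) in HN by (field; lra). nra.
      * apply Rmult_le_pos; [left; apply Rinv_0_lt_compat|]; lra.
  - intros; lra.
Qed.

Fixpoint maxg (g : nat -> R) (m : nat) : R :=
  match m with O => 1 | S m => Rmax (maxg g m) (g m) end.

Lemma maxg_ge1 g m : 1 <= maxg g m.
Proof. induction m; simpl; [lra|]. pose proof (Rmax_l (maxg g m) (g m)); lra. Qed.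

Lemma maxg_ge g m n : (n < m)%nat -> g n <= maxg g m.
Proof.
  induction m; intros h; [lia|]. simpl.
  destruct (Nat.eq_dec n m) as [->|hn].
  - apply Rmax_r.
  - pose proof (Rmax_l (maxg g m) (g m)). pose proof (IHm ltac:(lia)). lra.
Qed.

Lemma gbound (g : nat -> R) a : in_G g -> 0 < a ->
  (exists f : R -> R, subpoly_R f /\ forall x : nat, g x <= f (INR x)) ->
  exists C, 1 <= C /\ forall y x0 : nat, (1 <= y)%nat -> (x0 <= y)%nat ->
    g x0 <= C * (Rpower (INR y) (a/8))^4.
Proof.
  intros [g0 [g1 gpos]] ha [f [[_ sf] gf]].
  destruct (sf (a/2) ltac:(lra)) as [_ H]. destruct (H 1 ltac:(lra)) as [X HX].
  destruct (nat_above X) as [X' HX'].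
  exists (maxg g (S X')). split; [apply maxg_ge1|].
  intros y x0 hy hx.
  assert (hy1 : 1 <= INR y) by (apply (le_INR 1); lia).
  set (C := maxg g (S X')). assert (hC := maxg_ge1 g (S X')). fold C in hC.
  assert (hP : 1 <= Rpower (INR y) (a/8)) by (apply Rpower_ge1; lra).
  assert (hP4 : 1 <= (Rpower (INR y) (a/8))^4).
  { replace 1 with (1^4) by ring. apply pow_incr; lra. }
  destruct (Nat.lt_ge_cases x0 (S X')) as [hl|hg].
  - pose proof (maxg_ge g (S X') x0 hl). fold C in H0. nra.
  - assert (hx0 : X <= INR x0).
    { apply le_INR in hg. rewrite S_INR in hg. lra. }
    assert (hx1 : 0 < INR x0).
    { apply le_INR in hg. rewrite S_INR in hg. pose proof (pos_INR X'). lra. }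
    specialize (HX (INR x0) hx0 hx1).
    rewrite Rpower_Ropp in HX.
    assert (hf : f (INR x0) < Rpower (INR x0) (a/2)).
    { pose proof (Rpower_pos (INR x0) (a/2)).
      set (Q := Rpower (INR x0) (a/2)) in *.
      apply Rabs_def2 in HX. destruct HX as [HX _].
      apply (Rmult_lt_compat_l Q) in HX; [|lra].
      replace (Q * (/ Q * f (INR x0))) with (f (INR x0)) in HX by (field; lra). lra. }
    replace (a/2) with (INR 4 * (a/8)) in hf by (simpl; field).
    rewrite rp_n in hf by lra.
    assert ((Rpower (INR x0) (a / 8)) ^ 4 <= (Rpower (INR y) (a / 8)) ^ 4).
    { apply pow_incr. split; [left; apply Rpower_pos|].
      apply Rle_Rpower_l; [lra|]. split; [lra|]. apply le_INR; lia. }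
    pose proof (gf x0). nra.
Qed.

Lemma alg1 (gy gx0 C P : R) : 1 <= C -> C <= P -> 0 <= gx0 -> gx0 <= C * P^4 ->
  0 <= gy -> gy * P^8 <= gx0 -> gy * P^2 <= 1.
Proof.
  intros. assert (1 <= P) by lra.
  assert (h5 : gy * P^8 <= P^5).
  { assert (C * P^4 <= P * P^4) by (apply Rmult_le_compat_r; [apply pow_le|]; lra).
    replace (P^5) with (P * P^4) by ring. lra. }
  assert (h6 : P^5 <= P^6).
  { replace (P^6) with (P * P^5) by ring. assert (0 <= P^5) by (apply pow_le; lra). nra. }
  destruct (Rle_or_lt (gy * P^2) 1) as [h|h]; auto.
  assert (1 <= P^6) by (replace 1 with (1^6) by ring; apply pow_incr; lra).
  assert (P^6 * 1 < P^6 * (gy * P^2)) by (apply Rmult_lt_compat_l; lra).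
  replace (P^6 * (gy * P^2)) with (gy * P^8) in H7 by ring. lra.
Qed.

Theorem proposition29 (g : nat -> R) :
  in_G g ->
  nearly_periodic in_SS g ->
  (exists f : R -> R, subpoly_R f /\ forall x : nat, g x <= f (INR x)) ->
  exists a : R, 0 < a /\
  exists y : nat -> nat,
    (forall k, (y k < y (S k))%nat) /\
    (forall k, (0 < y k)%nat) /\
    (forall k, g (y k) <= Rpower (INR (y k)) (- a)) /\
    (forall x : nat, Un_cv (fun k => g (x + y k)%nat) (g x)).
Proof.
  intros hG [[a [ha per]] np2] hf.
  destruct (gbound g a hG ha hf) as [C [hC HC]].
  destruct hG as [g0 [g1 gpos]].
  assert (gnn : forall n, 0 <= g n).
  { intros [|n]; [lra|]. left; apply gpos; lia. }
  set (b := a/8). assert (hb : 0 < b) by (unfold b; lra).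
  destruct (pow_large b C hb) as [N0 HN0].
  set (Good := fun y : nat => (1 <= y)%nat /\
     (exists x0, (x0 < y)%nat /\ g y <= g x0 / Rpower (INR y) a) /\ C <= Rpower (INR y) b).
  assert (ex : forall N, exists y, (N <= y)%nat /\ Good y).
  { intros N. destruct (per (Nat.max N (Nat.max N0 1)) ltac:(lia)) as [x0 [y [h1 [h2 h3]]]].
    exists y. split; [lia|]. split; [lia|]. split; [exists x0; auto|]. apply HN0; lia. }
  assert (F : forall N, {y | (N <= y)%nat /\ Good y}).
  { intros N. apply constructive_indefinite_description. apply ex. }
  set (ys := fix ys k := match k with O => proj1_sig (F 1%nat) | S k => proj1_sig (F (S (ys k))) end).
  assert (hgood : forall k, Good (ys k)).
  { intros [|k]; simpl; exact (proj2 (proj2_sig (F _))). }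
  assert (hinc : forall k, (ys k < ys (S k))%nat).
  { intros k. simpl. pose proof (proj1 (proj2_sig (F (S (ys k))))). simpl in H. lia. }
  assert (hge : forall k, (k <= ys k)%nat).
  { induction k; [lia|]. pose proof (hinc k). lia. }
  assert (key : forall y, Good y ->
            g y * (Rpower (INR y) b)^2 <= 1 /\ 1 <= Rpower (INR y) b /\
            alpha_period g b y).
  { intros y [hy1 [[x0 [hx0 hgy]] hCy]].
    assert (hy : 1 <= INR y) by (apply (le_INR 1); lia).
    set (P := Rpower (INR y) b) in *.
    assert (hP : 1 <= P) by lra.
    assert (ha8 : Rpower (INR y) a = P^8).
    { unfold P, b. rewrite <- rp_n by lra. f_equal. simpl. field. }
    rewrite ha8 in hgy.
    assert (hP8 : 0 < P^8) by (apply pow_lt; lra).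
    assert (hm : g y * P^8 <= g x0).
    { apply (Rmult_le_compat_r (P^8)) in hgy; [|lra].
      replace (g x0 / P^8 * P^8) with (g x0) in hgy by (field; lra). exact hgy. }
    pose proof (HC y x0 hy1 ltac:(lia)). fold b P in H.
    split. { apply (alg1 (g y) (g x0) C P); auto. } split; [lra|].
    unfold alpha_period. exists x0. split; [lia|]. fold P.
    apply (Rmult_le_reg_r P); [lra|].
    replace (g x0 / P * P) with (g x0) by (field; lra).
    pose proof (gnn y). assert (P <= P^8).
    { replace P with (P^1) at 1 by ring. apply Rle_pow; [lra|lia]. }
    nra. }
  exists (a/4). split; [lra|]. exists ys.
  split; [exact hinc|]. split; [intros k; destruct (hgood k) as [h _]; lia|].
  split.
  { intros k. destruct (key _ (hgood k)) as [h1 [h2 _]].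
    rewrite Rpower_Ropp. replace (a/4) with (INR 2 * b) by (unfold b; simpl; field).
    rewrite rp_n.
    2: { destruct (hgood k) as [h _]. apply (lt_INR 0); lia. }
    set (P := Rpower (INR (ys k)) b) in *.
    apply (Rmult_le_reg_r (P^2)); [nra|].
    rewrite Rinv_l; [lra|]. nra. }
  intros x eps heps.
  destruct x as [|x].
  - destruct (pow_large b (2/eps) hb) as [N HN]. exists N. intros k hk.
    unfold R_dist. simpl. rewrite g0, Rminus_0_r.
    destruct (key _ (hgood k)) as [h1 [h2 _]].
    specialize (HN (ys k) ltac:(specialize (hge k); lia)).
    set (P := Rpower (INR (ys k)) b) in *.
    rewrite Rabs_pos_eq by apply gnn.
    assert (2 <= P * eps).
    { apply (Rmult_le_compat_r eps) in HN; [|lra].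
      replace (2/eps*eps) with 2 in HN by (field; lra). lra. }
    pose proof (gnn (ys k)). nra.
  - set (gx := g (S x)). assert (hgx : 0 < gx) by (apply gpos; lia).
    assert (hh : in_SS (fun _ => eps / (2 * gx))).
    { apply const_SS. apply Rdiv_lt_0_compat; lra. }
    destruct (np2 b hb _ hh) as [N1 HN1].
    destruct (pow_large b (/ gx) hb) as [N2 HN2].
    exists (Nat.max N1 (Nat.max N2 (S (S x)))). intros k hk.
    pose proof (hge k) as hk2.
    destruct (key _ (hgood k)) as [h1 [h2 h3]].
    specialize (HN2 (ys k) ltac:(lia)).
    set (P := Rpower (INR (ys k)) b) in *.
    assert (hprem : g (ys k) * P <= gx).
    { assert (/ P <= gx).
      { rewrite <- (Rinv_inv gx). apply Rinv_le_contravar; [|lra].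
        apply Rinv_0_lt_compat; lra. }
      assert (g (ys k) * P <= / P).
      { apply (Rmult_le_reg_r P); [lra|]. rewrite Rinv_l by lra. nra. }
      lra. }
    specialize (HN1 (ys k) h3 ltac:(lia) (S x) ltac:(lia) hprem).
    unfold R_dist. fold gx in HN1 |- *.
    pose proof (Rmin_l gx (g (S x + ys k)%nat)).
    assert (0 <= Rmin gx (g (S x + ys k)%nat)).
    { apply Rmin_glb; [lra|apply gnn]. }
    assert (0 < eps / (2 * gx)) by (apply Rdiv_lt_0_compat; lra).
    assert (hz : Rmin gx (g (S x + ys k)%nat) * (eps / (2 * gx)) <= gx * (eps / (2*gx))) by nra.
    replace (gx * (eps / (2 * gx))) with (eps/2) in hz by (field; lra).
    lra.
Qed.
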